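(* Let $G=(V,E)$ be a simple, unoriented, locally finite graph with graph distance $d$, and let $x,x'$ be adjacent vertices with degrees $d_x=\delta$ and $d_{x'}=\delta'$. Let $N$ be a positive integer and $t=1/N$. Then there exists an optimal coupling $\xi^t$ between $\mu^t_x$ and $\mu^t_{x'}$ (i.e. one attaining $W_1(\mu^t_x,\mu^t_{x'})$) all of whose coefficients lie in $\frac{1}{N\delta\delta'}\mathbb{N}$. Consequently $\kappa^1(x,x')$ and $\operatorname{ric}(x,x')$ lie in $\frac{1}{\delta\delta'}\mathbb{Z}$.
   Context: For a vertex $x$, $S_x$ is the set of neighbours of $x$ and $d_x=|S_x|$; $d$ is the graph distance. The lazy random walk $\mu^t_x$ is the probability measure with $\mu^t_x(x)=1-t$, $\mu^t_x(y)=t/d_x$ for $y\in S_x$, and $0$ elsewhere. A coupling between probability measures $\mu,\mu'$ on $V$ is a nonnegative function $\xi$ on $V\times V$ with $\sum_{y'}\xi(y,y')=\mu(y)$ and $\sum_y\xi(y,y')=\mu'(y')$. $W_1(\mu,\mu')=\inf_\xi\sum_{y,y'}\xi(y,y')d(y,y')$ over all couplings. $\kappa^t(x,x')=1-W_1(\mu^t_x,\mu^t_{x'})/d(x,x')$ (so $\kappa^1$ uses the uniform measures on the neighbourhoods), and $\operatorname{ric}(x,x')=\liminf_{t\to0^+}\kappa^t(x,x')/t$. *)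

(* Defs.v *)
From HB Require Import structures.
From mathcomp Require Import all_boot all_order all_algebra.
From mathcomp Require Import all_classical all_reals all_analysis.
Set Implicit Arguments. Unset Strict Implicit. Unset Printing Implicit Defensive.
Import Order.TTheory GRing.Theory Num.Theory.
Import numFieldNormedType.Exports.
Local Open Scope classical_set_scope.
Local Open Scope ring_scope.

(* A locally finite graph on a vertex type V is given by its (finite) lists
   of neighbours nb : V -> seq V; simplicity/undirectedness are hypotheses
   of the theorem (uniq, irreflexive, symmetric). *)

Section Graph.
Variables (V : choiceType) (nb : V -> seq V).

Fixpoint walk (n : nat) (y z : V) : Prop :=
  match n with
  | 0 => y = z
  | n.+1 => exists w, w \in nb y /\ walk n w z
  end.

Definition gdist (R : realType) (y z : V) : \bar R :=
  match pselect (exists n, `[< walk n y z >]) with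
  | left h => ((ex_minn h)%:R)%:E
  | right _ => +oo%E
  end.

Definition lazy_rw (R : realType) (t : R) (x : V) : V -> R :=
  fun y => if y == x then 1 - t
           else if y \in nb x then t / (size (nb x))%:R else 0.

Definition is_coupling (R : realType) (m m' : V -> R) (xi : V -> V -> R) : Prop :=
  (forall y y', 0 <= xi y y') /\
  (forall y, (\esum_(y' in [set: V]) (xi y y')%:E = (m y)%:E)%E) /\
  (forall y', (\esum_(y in [set: V]) (xi y y')%:E = (m' y')%:E)%E).

Definition coupling_cost (R : realType) (xi : V -> V -> R) : \bar R :=
  (\esum_(p in [set: V * V]) ((xi p.1 p.2)%:E * gdist R p.1 p.2))%E.

Definition W1 (R : realType) (m m' : V -> R) : \bar R :=
  ereal_inf [set coupling_cost xi | xi in [set xi | is_coupling m m' xi]].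

Definition kappa (R : realType) (t : R) (x x' : V) : R :=
  1 - fine (W1 (lazy_rw t x) (lazy_rw t x')) / fine (gdist R x x').

Definition ric (R : realType) (x x' : V) : \bar R :=
  limf_einf (fun t : R => (kappa t x x' / t)%:E) (0%R)^'+.

End Graph.

(* Main.v *)
Require Import Defs.
From HB Require Import structures.
From mathcomp Require Import all_boot all_order all_algebra.
From mathcomp Require Import all_classical all_reals all_analysis.
From mathcomp Require Import zify ring lra.
Set Implicit Arguments. Unset Strict Implicit. Unset Printing Implicit Defensive.
Import Order.TTheory GRing.Theory Num.Theory.
Local Open Scope ring_scope.

Lemma ker_nonzero (R : fieldType) n k (A : 'M[R]_(n,k)) (w : 'cV_k) :
  w != 0 -> A *m w = 0 -> (k <= n)%N -> exists u : 'rV_n, u != 0 /\ u *m A = 0.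
Proof.
move=> w0 Aw kn.
have wT : (w^T <= kermx A^T)%MS.
  by apply/sub_kermxP; rewrite -trmx_mul Aw trmx0.
have := mxrankS wT; rewrite rank_rV trmx_eq0 w0 mxrank_ker mxrank_tr => h1.
have : ~~ row_free A.
  rewrite /row_free; apply/negP => /eqP hA; move: h1; rewrite hA.
  by rewrite subn_gt0 ltnNge kn.
rewrite -kermx_eq0 => /negP hK.
case: (pickP (fun i => row i (kermx A) != 0)) => [i hi|hall]; last first.
  exfalso; apply: hK; apply/eqP/row_matrixP => i.
  by rewrite row0; apply/eqP/negbFE/hall.
exists (row i (kermx A)); split => //.
by rewrite -row_mul mulmx_ker row0.
Qed.

Section Integ.
Variables (R : archiRealFieldType) (I J : finType).
Implicit Types X D : I -> J -> R.

Definition fracs X : {set I * J} := [set p | X p.1 p.2 \notin Num.nat].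

Lemma deg2 X : (forall i j, 0 <= X i j) -> (forall i, \sum_j X i j \is a Num.nat) ->
  forall i j, X i j \notin Num.nat -> exists2 j', j' != j & X i j' \notin Num.nat.
Proof.
move=> X0 Xr i j hij.
case: (pickP (fun j' => (j' != j) && (X i j' \notin Num.nat))) => [j' /andP[h1 h2]|hall].
  by exists j'.
exfalso; move/negP: hij; apply.
have e : X i j = \sum_j0 X i j0 - \sum_(j0 | j0 != j) X i j0.
  by rewrite (bigD1 j) //= addrK.
rewrite natrEint X0 andbT e rpredB ?intr_nat //.
apply: rpred_sum => j0 hj0; have := hall j0; rewrite hj0 /=.
by move/negbFE.
Qed.

Lemma card_fracs X : #|fracs X| = (\sum_i \sum_j (X i j \notin Num.nat))%N.
Proof.
by rewrite pair_bigA -sum1_card big_mkcond; apply: eq_bigr => -[i j]; rewrite inE.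
Qed.

Lemma count2 X : (forall i j, 0 <= X i j) -> (forall i, \sum_j X i j \is a Num.nat) ->
  (2 * #|[set i | [exists j, X i j \notin Num.nat]]| <= \sum_i \sum_j (X i j \notin Num.nat))%N.
Proof.
move=> X0 Xr.
rewrite mulnC -sum1_card big_distrl /= [X in (_ <= X)%N](bigID (fun i => i \in [set i | [exists j, X i j \notin Num.nat]])) /=.
apply: leq_trans (leq_addr _ _).
apply: leq_sum => i; rewrite inE => /existsP [j hj].
have [j' hj'1 hj'2] := deg2 X0 Xr hj.
rewrite mul1n (bigD1 j) //= (bigD1 j') //= hj hj'2 /=.
by rewrite addnA.
Qed.

End Integ.

Section Integ2.
Variables (R : archiRealFieldType) (I J : finType).
Implicit Types X D : I -> J -> R.

Lemma exists_D X : (forall i j, 0 <= X i j) -> (forall i, \sum_j X i j \is a Num.nat) ->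
  (forall j, \sum_i X i j \is a Num.nat) -> forall p0, p0 \in fracs X ->
  exists D, [/\ (forall i j, D i j != 0 -> (i, j) \in fracs X),
     (exists i j, D i j != 0), (forall i, \sum_j D i j = 0) & (forall j, \sum_i D i j = 0)].
Proof.
move=> X0 Xr Xc p0 p0F.
set F := fracs X.
set RF := [set i | [exists j, X i j \notin Num.nat]].
set CF := [set j | [exists i, X i j \notin Num.nat]].
have hR := count2 X0 Xr.
have hC := @count2 R J I (fun j i => X i j) (fun (j : J) (i : I) => X0 i j) Xc.
rewrite exchange_big /= -card_fracs -/F in hC.
rewrite -card_fracs -/F in hR.
rewrite -/RF in hR. rewrite -/CF in hC.
have kn : (#|RF| + #|CF| <= #|F|)%N by lia.
have inF q : q \in F -> q.1 \in RF /\ q.2 \in CF.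
  rewrite inE => hq; split; rewrite inE; apply/existsP; by [exists q.2 | exists q.1].
pose A1 : 'M[R]_(#|F|, #|RF|) := \matrix_(k, s) ((enum_val k).1 == enum_val s)%:R.
pose A2 : 'M[R]_(#|F|, #|CF|) := \matrix_(k, s) ((enum_val k).2 == enum_val s)%:R.
pose c1 : 'cV[R]_#|RF| := const_mx 1.
pose c2 : 'cV[R]_#|CF| := const_mx 1.
have A1c : A1 *m c1 = const_mx 1.
  apply/matrixP => k z; rewrite !mxE.
  under eq_bigr do rewrite !mxE mulr1.
  rewrite -(big_enum_val (fun i => ((enum_val k).1 == i)%:R)) /=.
  have [h1 _] := inF _ (enum_valP k).
  rewrite (bigD1 (enum_val k).1) //= eqxx big1 ?addr0 //.
  by move=> i /andP[_ hi]; rewrite eq_sym (negbTE hi).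
have A2c : A2 *m c2 = const_mx 1.
  apply/matrixP => k z; rewrite !mxE.
  under eq_bigr do rewrite !mxE mulr1.
  rewrite -(big_enum_val (fun i => ((enum_val k).2 == i)%:R)) /=.
  have [_ h1] := inF _ (enum_valP k).
  rewrite (bigD1 (enum_val k).2) //= eqxx big1 ?addr0 //.
  by move=> i /andP[_ hi]; rewrite eq_sym (negbTE hi).
have w0 : col_mx c1 (- c2) != 0.
  have [h1 _] := inF _ p0F.
  rewrite col_mx_eq0 negb_and; apply/orP; left; apply/negP => /eqP h.
  have := congr1 (fun M : 'cV[R]_#|RF| => M (enum_rank_in h1 p0.1) 0) h.
  by rewrite !mxE => /eqP; rewrite oner_eq0.
have Aw : row_mx A1 A2 *m col_mx c1 (- c2) = 0.
  rewrite mul_row_col mulmxN A1c A2c subrr //.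
have [u [u0 uA]] := ker_nonzero w0 Aw kn.
move: uA; rewrite mul_mx_row => /eqP; rewrite row_mx_eq0 => /andP[/eqP uA1 /eqP uA2].
pose D i j := if (i, j) \in F then u 0 (enum_rank_in p0F (i, j)) else 0.
have key (h : I * J -> R) : \sum_k u 0 k * h (enum_val k) = \sum_i \sum_j D i j * h (i, j).
  transitivity (\sum_(q in F) u 0 (enum_rank_in p0F q) * h q).
    by rewrite [RHS]big_enum_val /=; apply: eq_bigr => k _ /=; rewrite enum_valK_in.
  rewrite big_mkcond pair_bigA; apply: eq_bigr => -[i j] _ /=.
  by rewrite /D; case: ifP => // _; rewrite mul0r.
exists D; split.
- by move=> i j; rewrite /D; case: ifP => // _; rewrite eqxx.
- case: (pickP (fun k => u 0 k != 0)) => [k hk|hall]; last first.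
    by exfalso; move/negP: u0; apply; apply/eqP/rowP => k; rewrite mxE; apply/eqP/negbFE/hall.
  exists (enum_val k).1, (enum_val k).2.
  by rewrite /D -surjective_pairing enum_valP enum_valK_in.
- move=> i.
  case: (boolP (i \in RF)) => hi; last first.
    apply: big1 => j _; rewrite /D; case: ifP => // hij.
    by have [h1 _] := inF _ hij; rewrite h1 in hi.
  have := congr1 (fun M : 'rV[R]_#|RF| => M 0 (enum_rank_in hi i)) uA1.
  rewrite !mxE.
  under eq_bigr do rewrite mxE enum_rankK_in //.
  rewrite (key (fun q => (q.1 == i)%:R)) /= => h; apply: (etrans _ h).
  rewrite (bigD1 i) //=.
  have -> : \sum_(i' | i' != i) \sum_j D i' j * (i' == i)%:R = 0.
    by apply: big1 => i' hi'; apply: big1 => j _; rewrite (negbTE hi') mulr0.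
  by rewrite addr0; apply: eq_bigr => j _; rewrite eqxx mulr1.
- move=> j.
  case: (boolP (j \in CF)) => hj; last first.
    apply: big1 => i _; rewrite /D; case: ifP => // hij.
    by have [_ h1] := inF _ hij; rewrite h1 in hj.
  have := congr1 (fun M : 'rV[R]_#|CF| => M 0 (enum_rank_in hj j)) uA2.
  rewrite !mxE.
  under eq_bigr do rewrite mxE enum_rankK_in //.
  rewrite (key (fun q => (q.2 == j)%:R)) /= => h; apply: (etrans _ h).
  apply: eq_bigr => i _.
  rewrite (bigD1 j) //=.
  have -> : \sum_(j' | j' != j) D i j' * (j' == j)%:R = 0.
    by apply: big1 => j' hj'; rewrite (negbTE hj') mulr0.
  by rewrite addr0 eqxx mulr1.
Qed.

Lemma divNK (a e : R) : e != 0 -> a / (- e) * e = - a.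
Proof. by move=> h; rewrite invrN mulrN mulNr divfK. Qed.

Lemma addBK' (a b : R) : a + (b - a) = b.
Proof. by rewrite addrC subrK. Qed.

Lemma addNBK (a b : R) : a + - (a - b) = b.
Proof. by rewrite opprB addBK'. Qed.

Definition cost (C : I -> J -> R) X := \sum_i \sum_j X i j * C i j.

Lemma step_E X C E (q0 : I * J) : (forall i j, 0 <= X i j) ->
  (forall i j, E i j != 0 -> (i, j) \in fracs X) -> E q0.1 q0.2 != 0 ->
  (forall i, \sum_j E i j = 0) -> (forall j, \sum_i E i j = 0) -> cost C E <= 0 ->
  exists X', [/\ (forall i j, 0 <= X' i j), (forall i, \sum_j X' i j = \sum_j X i j),
     (forall j, \sum_i X' i j = \sum_i X i j), cost C X' <= cost C X &
     (#|fracs X'| < #|fracs X|)%N].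
Proof.
move=> X0 Esup Eq0 Er Ec EC.
pose P := fun q : I * J => E q.1 q.2 != 0.
pose fl q : R := (Num.floor (X q.1 q.2))%:~R.
pose st q := if 0 < E q.1 q.2 then (fl q + 1 - X q.1 q.2) / E q.1 q.2
             else (X q.1 q.2 - fl q) / (- E q.1 q.2).
have flX q : fl q <= X q.1 q.2 < fl q + 1.
  by have := floor_itv (X q.1 q.2); rewrite /fl intrD.
have fl0 q : 0 <= fl q by rewrite /fl ler0z floor_ge0.
have st0 q : 0 <= st q.
  have [h1 h2] := andP (flX q).
  rewrite /st; case: ifP => hE.
    by apply: divr_ge0; [rewrite subr_ge0 ltW | rewrite ltW].
  apply: divr_ge0; first by rewrite subr_ge0.
  by rewrite oppr_ge0 leNgt hE.
case: (@arg_minP _ _ _ q0 P st Eq0) => q Pq qmin.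
pose s := st q.
pose X' i j := X i j + s * E i j.
have X'0 : forall i j, 0 <= X' i j.
  move=> i j; rewrite /X'.
  case: (ltrgtP (E i j) 0) => hE.
  - have hs : s <= st (i, j) by apply: qmin; rewrite /P /= lt_eqF.
    have : st (i, j) * E i j = fl (i, j) - X i j.
      by rewrite /st /= ltNge (ltW hE) /= divNK ?lt_eqF // opprB.
    move=> e.
    have : st (i, j) * E i j <= s * E i j by rewrite ler_wnM2r // ltW.
    rewrite e => h; have := fl0 (i, j); lra.
  - have := X0 i j; have := st0 q; rewrite -/s => h1 h2.
    have : 0 <= s * E i j by rewrite mulr_ge0 // ltW.
    lra.
  - by rewrite hE mulr0 addr0.
have X'q : X' q.1 q.2 \is a Num.nat.
  rewrite natrEint X'0 andbT.
  have -> : X' q.1 q.2 = if 0 < E q.1 q.2 then fl q + 1 else fl q.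
    rewrite /X' /s /st; case: ifP => hE.
      rewrite divfK; last by rewrite gt_eqF.
      exact: (addBK' (X q.1 q.2) (fl q + 1)).
    rewrite (divNK (X q.1 q.2 - fl q) Pq).
    exact: (addNBK (X q.1 q.2) (fl q)).
  have flint : fl q \is a Num.int by rewrite /fl; apply: rpred_int.
  case: ifP => _ //.
  by apply: rpredD => //; apply: rpred1.
exists X'; split => //.
- by move=> i; rewrite /X' big_split /= -mulr_sumr Er mulr0 addr0.
- by move=> j; rewrite /X' big_split /= -mulr_sumr Ec mulr0 addr0.
- rewrite /cost /X'.
  under eq_bigr do under eq_bigr do rewrite mulrDl -mulrA.
  under eq_bigr do rewrite big_split /=.
  rewrite big_split /=.
  have -> : \sum_i \sum_j s * (E i j * C i j) = s * cost C E.
    by rewrite /cost mulr_sumr; apply: eq_bigr => i _; rewrite mulr_sumr.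
  by rewrite gerDl; exact: mulr_ge0_le0 (st0 q) EC.
- apply: proper_card; apply/properP; split.
    apply/fintype.subsetP => p; rewrite !inE; apply: contraNN => hp.
    case: (boolP (E p.1 p.2 != 0)) => hE.
      by have := Esup _ _ hE; rewrite inE hp.
    by move/negbNE/eqP: hE; rewrite /X' => ->; rewrite mulr0 addr0.
  exists q; last by rewrite inE X'q.
  by have := Esup _ _ Pq; rewrite -surjective_pairing.
Qed.

Lemma nat_of_empty X : fracs X = finset.set0 -> forall i j, X i j \is a Num.nat.
Proof.
move=> h i j; apply/negPn/negP => hij.
have : (i, j) \in fracs X by rewrite inE.
by rewrite h inE.
Qed.

Lemma integral_improve C X : (forall i j, 0 <= X i j) ->
  (forall i, \sum_j X i j \is a Num.nat) -> (forall j, \sum_i X i j \is a Num.nat) ->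
  exists Y, [/\ (forall i j, Y i j \is a Num.nat), (forall i, \sum_j Y i j = \sum_j X i j),
     (forall j, \sum_i Y i j = \sum_i X i j) & cost C Y <= cost C X].
Proof.
move: (leqnn #|fracs X|); move: {2}#|fracs X| => n.
elim: n X => [|n IH] X hn X0 Xr Xc.
  exists X; split => //; apply: nat_of_empty; apply/eqP; rewrite -cards_eq0.
  by rewrite -leqn0.
case: (set_0Vmem (fracs X)) => [h0 | [p0 hp0]].
  by exists X; split => //; apply: nat_of_empty.
have [D [Dsup [i0 [j0 Dnz]] Dr Dc]] := exists_D X0 Xr Xc hp0.
have [X' [X'0 X'r X'c X'C X'n]] : exists X', [/\ (forall i j, 0 <= X' i j),
     (forall i, \sum_j X' i j = \sum_j X i j),
     (forall j, \sum_i X' i j = \sum_i X i j), cost C X' <= cost C X &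
     (#|fracs X'| < #|fracs X|)%N].
  case: (lerP (cost C D) 0) => hD.
    exact: (step_E (q0 := (i0, j0)) X0 Dsup Dnz Dr Dc hD).
  apply: (step_E (E := fun i j => - D i j) (q0 := (i0, j0)) X0).
  - by move=> i j; rewrite oppr_eq0; apply: Dsup.
  - by rewrite /= oppr_eq0.
  - by move=> i; rewrite sumrN Dr oppr0.
  - by move=> j; rewrite sumrN Dc oppr0.
  - have -> : cost C (fun i j => - D i j) = - cost C D.
      rewrite /cost -sumrN; apply: eq_bigr => i _; rewrite -sumrN.
      by apply: eq_bigr => j _; rewrite mulNr.
    by rewrite oppr_le0 ltW.
have [Y [Yn Yr Yc YC]] := IH X' (leq_trans (ltnSn _) (leq_trans X'n hn)) X'0
  (fun i => eq_ind_r (fun z => z \is a Num.nat) (Xr i) (X'r i))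
  (fun j => eq_ind_r (fun z => z \is a Num.nat) (Xc j) (X'c j)).
exists Y; split => //.
- by move=> i; rewrite Yr X'r.
- by move=> j; rewrite Yc X'c.
- exact: le_trans YC X'C.
Qed.

End Integ2.

Local Open Scope classical_set_scope.

Lemma esum_fin (R : realType) (T : choiceType) (K : finType) (g : K -> T)
  (f : T -> R) : injective g -> (forall y, 0 <= f y) ->
  (forall y, (forall k, g k != y) -> f y = 0) ->
  (\esum_(y in [set: T]) (f y)%:E = (\sum_k f (g k))%:E)%E.
Proof.
move=> ginj f0 fz.
have -> : (\esum_(y in [set: T]) (f y)%:E = \esum_(y in range g) (f y)%:E)%E.
  rewrite [RHS]esum_mkcond; apply: eq_esum => y _; case: ifPn => // hy.
  rewrite fz // => k; apply/eqP => hk; move: hy; rewrite notin_setE; apply.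
  by exists k.
rewrite esum_fset; last by move=> y _; rewrite lee_fin.
  rewrite fsbig_image; last by move=> k1 k2 _ _ /ginj.
  have -> : [set: K] = [set` enum K] by apply/seteqP; split => k _ //=; rewrite mem_enum.
  by rewrite -(fsbig_seq _ _ (enum_uniq K)) big_enum /= sumEFin.
exact/finite_image/finite_finset.
Qed.

Lemma esum_term (R : realType) (T : choiceType) (f : T -> R) y0 :
  (forall y, 0 <= f y) -> ((f y0)%:E <= \esum_(y in [set: T]) (f y)%:E)%E.
Proof.
move=> f0; apply: esum_ge; exists [set y0]; first by split => //; exact: finite_set1.
by rewrite fsbig_set1.
Qed.

Section Main.
Variables (R : realType) (V : choiceType) (nb : V -> seq V).
Hypotheses (nb_uniq : forall v, uniq (nb v)) (nb_irr : forall v, v \notin nb v)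
  (nb_sym : forall v w, (w \in nb v) = (v \in nb w)).
Variables (x x' : V).
Hypothesis adj : x' \in nb x.

Lemma walk_cat m n y w z : walk nb m y w -> walk nb n w z -> walk nb (m + n) y z.
Proof.
elim: m y => [|m IH] y /=; first by move=> ->.
by move=> [u [hu hw]] hn; exists u; split => //; apply: IH.
Qed.

Lemma gdist_fin y z n : walk nb n y z ->
  exists m : nat, [/\ gdist nb R y z = (m%:R)%:E, (m <= n)%N & (m = 0%N -> y = z)].
Proof.
move=> hw; rewrite /gdist; case: pselect => [h|h]; last first.
  by exfalso; apply: h; exists n; apply/asboolP.
case: ex_minnP => m /asboolP hm hmin; exists m; split => //.
  by apply: hmin; apply/asboolP.
by move=> e; move: hm; rewrite e.
Qed.

Lemma xx'_neq : x != x'.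
Proof. by apply/eqP => e; move: adj; rewrite -e (negbTE (nb_irr x)). Qed.

Lemma gdist_xx' : gdist nb R x x' = 1%:E.
Proof.
have hw : walk nb 1 x x' by exists x'.
have [m [-> hm h0]] := gdist_fin hw.
case: m hm h0 => [|[|//]] _ h0; last by [].
by have := xx'_neq; rewrite (h0 erefl) eqxx.
Qed.

Local Notation dl := (size (nb x)).
Local Notation dl' := (size (nb x')).
Local Notation I := 'I_dl.+1.
Local Notation J := 'I_dl'.+1.
Definition a (i : I) : V := nth x (x :: nb x) i.
Definition b (j : J) : V := nth x' (x' :: nb x') j.

Lemma uniq_cons v : uniq (v :: nb v).
Proof. by rewrite /= nb_irr nb_uniq. Qed.

Lemma a_inj : injective a.
Proof.
move=> i1 i2 /eqP; rewrite /a nth_uniq ?uniq_cons //= => /eqP h; exact: val_inj.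
Qed.

Lemma b_inj : injective b.
Proof.
move=> i1 i2 /eqP; rewrite /b nth_uniq ?uniq_cons //= => /eqP h; exact: val_inj.
Qed.

Lemma a_onto y : y \in x :: nb x -> exists i, a i = y.
Proof.
move=> hy; have hi : (index y (x :: nb x) < dl.+1)%N by rewrite -index_mem in hy.
by exists (Ordinal hi); rewrite /a /= nth_index.
Qed.

Lemma b_onto y : y \in x' :: nb x' -> exists j, b j = y.
Proof.
move=> hy; have hi : (index y (x' :: nb x') < dl'.+1)%N by rewrite -index_mem in hy.
by exists (Ordinal hi); rewrite /b /= nth_index.
Qed.

Lemma a_in i : a i \in x :: nb x.
Proof. by rewrite /a mem_nth. Qed.
Lemma b_in j : b j \in x' :: nb x'.
Proof. by rewrite /b mem_nth. Qed.

Lemma walk_a i : exists n, walk nb n (a i) x.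
Proof.
have := a_in i; rewrite inE => /orP[/eqP ->|h]; first by exists 0%N.
by exists 1%N; exists x; split => //; rewrite -nb_sym.
Qed.

Lemma walk_b j : exists n, walk nb n x' (b j).
Proof.
have := b_in j; rewrite inE => /orP[/eqP ->|h]; first by exists 0%N.
by exists 1%N; exists (b j).
Qed.

Definition c (i : I) (j : J) : R := fine (gdist nb R (a i) (b j)).

Lemma c_spec i j : gdist nb R (a i) (b j) = (c i j)%:E /\ c i j \is a Num.nat.
Proof.
have [n1 h1] := walk_a i; have [n2 h2] := walk_b j.
have hw : walk nb (n1 + 1 + n2) (a i) (b j).
  by apply: walk_cat (walk_cat h1 _) h2; exists x'.
have [m [hm _ _]] := gdist_fin hw.
by rewrite /c hm /=; split => //; apply: rpred_nat.
Qed.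

Lemma c_ge0 i j : 0 <= c i j.
Proof. by have [_ h] := c_spec i j; rewrite natr_ge0. Qed.

Lemma a0 : a ord0 = x. Proof. by []. Qed.
Lemma b0 : b ord0 = x'. Proof. by []. Qed.

Lemma c00 : c ord0 ord0 = 1.
Proof. by rewrite /c a0 b0 gdist_xx'. Qed.

Lemma a_nb i : i != ord0 -> a i \in nb x /\ a i != x.
Proof.
move=> hi; have h : a i != x by apply: contra hi => /eqP e; apply/eqP/a_inj; rewrite e.
by have := a_in i; rewrite inE (negbTE h).
Qed.

Lemma b_nb j : j != ord0 -> b j \in nb x' /\ b j != x'.
Proof.
move=> hj; have h : b j != x' by apply: contra hj => /eqP e; apply/eqP/b_inj; rewrite e.
by have := b_in j; rewrite inE (negbTE h).
Qed.

Lemma lazy_a (t : R) i : lazy_rw nb t x (a i) = if i == ord0 then 1 - t else t / dl%:R.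
Proof.
rewrite /lazy_rw; case: (eqVneq i ord0) => [->|hi]; first by rewrite a0 !eqxx.
by have [h1 h2] := a_nb hi; rewrite (negbTE h2) h1.
Qed.

Lemma lazy_b (t : R) j : lazy_rw nb t x' (b j) = if j == ord0 then 1 - t else t / dl'%:R.
Proof.
rewrite /lazy_rw; case: (eqVneq j ord0) => [->|hj]; first by rewrite b0 !eqxx.
by have [h1 h2] := b_nb hj; rewrite (negbTE h2) h1.
Qed.

Lemma lazy_outa (t : R) y : (forall i, a i != y) -> lazy_rw nb t x y = 0.
Proof.
move=> h; rewrite /lazy_rw; case: eqP => [e|_]; first by have := h ord0; rewrite a0 e eqxx.
case: ifP => // hy; have [i hi] : exists i, a i = y by apply: a_onto; rewrite inE hy orbT.
by have := h i; rewrite hi eqxx.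
Qed.

Lemma lazy_outb (t : R) y : (forall j, b j != y) -> lazy_rw nb t x' y = 0.
Proof.
move=> h; rewrite /lazy_rw; case: eqP => [e|_]; first by have := h ord0; rewrite b0 e eqxx.
case: ifP => // hy; have [j hj] : exists j, b j = y by apply: b_onto; rewrite inE hy orbT.
by have := h j; rewrite hj eqxx.
Qed.

Definition m (t : R) i := lazy_rw nb t x (a i).
Definition m' (t : R) j := lazy_rw nb t x' (b j).

Definition MC (t : R) (X : I -> J -> R) := [/\ forall i j, 0 <= X i j,
  forall i, \sum_j X i j = m t i & forall j, \sum_i X i j = m' t j].

Lemma gdist_ge0 y z : (0 <= gdist nb R y z)%E.
Proof. by rewrite /gdist; case: pselect => // h; rewrite lee_fin. Qed.

Lemma coupling_to_mat (t : R) xi : is_coupling (lazy_rw nb t x) (lazy_rw nb t x') xi ->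
  MC t (fun i j => xi (a i) (b j)) /\
  coupling_cost nb xi = (cost c (fun i j => xi (a i) (b j)))%:E.
Proof.
case=> [x0 [hr hc]].
have zr y y' : (forall i, a i != y) -> xi y y' = 0.
  move=> hy; apply/eqP; rewrite eq_le x0 andbT.
  by have := esum_term y' (x0 y); rewrite hr lazy_outa // lee_fin.
have zc y y' : (forall j, b j != y') -> xi y y' = 0.
  move=> hy; apply/eqP; rewrite eq_le x0 andbT.
  have := esum_term (f := fun z => xi z y') y (fun z => x0 z y').
  by rewrite hc lazy_outb // lee_fin.
split; first split.
- by move=> i j; apply: x0.
- move=> i; have := hr (a i).
  rewrite (esum_fin (g := b) (f := xi (a i)) b_inj (x0 (a i))); first by case.
  by move=> y' hy'; apply: zc.
- move=> j; have := hc (b j).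
  rewrite (esum_fin (g := a) (f := fun y => xi y (b j)) a_inj (fun y => x0 y (b j))); first by case.
  by move=> y hy; apply: zr.
rewrite /coupling_cost.
transitivity (\esum_(p in [set: V * V]) (xi p.1 p.2 * fine (gdist nb R p.1 p.2))%:E)%E.
  apply: eq_esum => -[y y'] _ /=.
  case: (pickP (fun i => a i == y)) => [i /eqP <-|ha]; last first.
    by rewrite zr ?mul0e ?mul0r // => i; rewrite ha.
  case: (pickP (fun j => b j == y')) => [j /eqP <-|hb]; last first.
    by rewrite zc ?mul0e ?mul0r // => j; rewrite hb.
  by have [-> _] := c_spec i j.
rewrite (esum_fin (g := fun p : I * J => (a p.1, b p.2))).
- by rewrite /cost pair_bigA.
- by move=> [i1 j1] [i2 j2] [/a_inj -> /b_inj ->].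
- by move=> p; rewrite mulr_ge0 // fine_ge0 // gdist_ge0.
- move=> [y y'] hp /=.
  case: (pickP (fun i => a i == y)) => [i /eqP ei|ha]; last first.
    by rewrite zr ?mul0r // => i; rewrite ha.
  case: (pickP (fun j => b j == y')) => [j /eqP ej|hb]; last first.
    by rewrite zc ?mul0r // => j; rewrite hb.
  by have := hp (i, j); rewrite /= ei ej eqxx.
Qed.

Definition liftm (X : I -> J -> R) (y y' : V) : R :=
  match [pick i | a i == y], [pick j | b j == y'] with
  | Some i, Some j => X i j
  | _, _ => 0
  end.

Lemma lift_ab X i j : liftm X (a i) (b j) = X i j.
Proof.
rewrite /liftm; case: pickP => [i' /eqP /a_inj ->|h]; last by have := h i; rewrite eqxx.
by case: pickP => [j' /eqP /b_inj ->|h]; last by have := h j; rewrite eqxx.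
Qed.

Lemma lift_outa X y y' : (forall i, a i != y) -> liftm X y y' = 0.
Proof. by move=> h; rewrite /liftm; case: pickP => // i hi; have := h i; rewrite hi. Qed.

Lemma lift_outb X y y' : (forall j, b j != y') -> liftm X y y' = 0.
Proof.
move=> h; rewrite /liftm; case: pickP => // i _.
by case: pickP => // j hj; have := h j; rewrite hj.
Qed.

Lemma lift_ge0 X : (forall i j, 0 <= X i j) -> forall y y', 0 <= liftm X y y'.
Proof.
move=> X0 y y'; rewrite /liftm.
by case: pickP => // i _; case: pickP => // j _.
Qed.

Lemma mat_to_coupling (t : R) X : MC t X ->
  is_coupling (lazy_rw nb t x) (lazy_rw nb t x') (liftm X) /\
  coupling_cost nb (liftm X) = (cost c X)%:E.
Proof.
case=> [X0 Xr Xc]; have L0 := lift_ge0 X0.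
split; first split => //; first split.
- move=> y; case: (pickP (fun i => a i == y)) => [i /eqP <-|ha]; last first.
    rewrite lazy_outa; last by move=> i; rewrite ha.
    by apply: esum1 => y' _; rewrite lift_outa // => i; rewrite ha.
  rewrite (esum_fin (g := b) (f := liftm X (a i)) b_inj (L0 (a i))).
    by congr EFin; rewrite -/(m t i) -Xr; apply: eq_bigr => j _; rewrite lift_ab.
  by move=> y' hy'; apply: lift_outb.
- move=> y'; case: (pickP (fun j => b j == y')) => [j /eqP <-|hb]; last first.
    rewrite lazy_outb; last by move=> j; rewrite hb.
    by apply: esum1 => y _; rewrite lift_outb // => j; rewrite hb.
  rewrite (esum_fin (g := a) (f := fun y => liftm X y (b j)) a_inj (fun y => L0 y (b j))).
    by congr EFin; rewrite -/(m' t j) -Xc; apply: eq_bigr => i _; rewrite lift_ab.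
  by move=> y hy; apply: lift_outa.
rewrite /coupling_cost.
transitivity (\esum_(p in [set: V * V]) (liftm X p.1 p.2 * fine (gdist nb R p.1 p.2))%:E)%E.
  apply: eq_esum => -[y y'] _ /=.
  case: (pickP (fun i => a i == y)) => [i /eqP <-|ha]; last first.
    by rewrite lift_outa ?mul0e ?mul0r // => i; rewrite ha.
  case: (pickP (fun j => b j == y')) => [j /eqP <-|hb]; last first.
    by rewrite lift_outb ?mul0e ?mul0r // => j; rewrite hb.
  by have [-> _] := c_spec i j.
rewrite (esum_fin (g := fun p : I * J => (a p.1, b p.2))).
- rewrite /cost pair_bigA; congr EFin; apply: eq_bigr => -[i j] _ /=.
  by rewrite lift_ab.
- by move=> [i1 j1] [i2 j2] [/a_inj -> /b_inj ->].
- by move=> p; rewrite mulr_ge0 // fine_ge0 // gdist_ge0.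
- move=> [y y'] hp /=.
  case: (pickP (fun i => a i == y)) => [i /eqP ei|ha]; last first.
    by rewrite lift_outa ?mul0r // => i; rewrite ha.
  case: (pickP (fun j => b j == y')) => [j /eqP ej|hb]; last first.
    by rewrite lift_outb ?mul0r // => j; rewrite hb.
  by have := hp (i, j); rewrite /= ei ej eqxx.
Qed.

Lemma W1_mat (t : R) : W1 nb (lazy_rw nb t x) (lazy_rw nb t x') =
  ereal_inf [set (cost c X)%:E | X in MC t].
Proof.
rewrite /W1; congr ereal_inf; apply/seteqP; split => z /=.
  move=> [xi hxi <-]; have [h1 h2] := coupling_to_mat hxi.
  by exists (fun i j => xi (a i) (b j)).
move=> [X hX <-]; have [h1 h2] := mat_to_coupling hX.
by exists (liftm X).
Qed.

Lemma dl_gt0 : (0 < dl)%N.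
Proof. by move: adj; case: (nb x). Qed.

Lemma dl'_gt0 : (0 < dl')%N.
Proof. by move: adj; rewrite nb_sym; case: (nb x'). Qed.

Lemma sum_const_lift (n : nat) (F : 'I_n.+1 -> R) (v : R) :
  (forall i, i != ord0 -> F i = v) -> \sum_i F i = F ord0 + v *+ n.
Proof.
move=> h; rewrite big_ord_recl; congr (_ + _).
rewrite (eq_bigr (fun=> v)); first by rewrite sumr_const card_ord.
by move=> i _; apply: h; rewrite eq_sym neq_lift.
Qed.

Lemma sum_m (t : R) : \sum_i m t i = 1.
Proof.
rewrite (@sum_const_lift _ _ (t / dl%:R)); last by move=> i hi; rewrite /m lazy_a (negbTE hi).
rewrite /m lazy_a eqxx -[X in _ + X = _]mulr_natr divfK ?subrK //.
by rewrite pnatr_eq0 -lt0n dl_gt0.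
Qed.

Lemma sum_m' (t : R) : \sum_j m' t j = 1.
Proof.
rewrite (@sum_const_lift _ _ (t / dl'%:R)); last by move=> j hj; rewrite /m' lazy_b (negbTE hj).
rewrite /m' lazy_b eqxx -[X in _ + X = _]mulr_natr divfK ?subrK //.
by rewrite pnatr_eq0 -lt0n dl'_gt0.
Qed.

Lemma m_ge0 (t : R) i : 0 <= t <= 1 -> 0 <= m t i.
Proof.
move=> /andP[t0 t1]; rewrite /m lazy_a; case: ifP => _; first by rewrite subr_ge0.
by rewrite divr_ge0.
Qed.

Lemma m'_ge0 (t : R) j : 0 <= t <= 1 -> 0 <= m' t j.
Proof.
move=> /andP[t0 t1]; rewrite /m' lazy_b; case: ifP => _; first by rewrite subr_ge0.
by rewrite divr_ge0.
Qed.

Lemma prod_MC (t : R) : 0 <= t <= 1 -> MC t (fun i j => m t i * m' t j).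
Proof.
move=> ht; split.
- by move=> i j; rewrite mulr_ge0 // ?m_ge0 ?m'_ge0.
- by move=> i; rewrite -mulr_sumr sum_m' mulr1.
- by move=> j; rewrite -mulr_suml sum_m mul1r.
Qed.

Lemma cost_ge0 X : (forall i j, 0 <= X i j) -> 0 <= cost c X.
Proof.
by move=> X0; apply: sumr_ge0 => i _; apply: sumr_ge0 => j _; rewrite mulr_ge0 ?c_ge0.
Qed.

Lemma cost_lb (t : R) X : MC t X -> 1 - 2 * t <= cost c X.
Proof.
case=> X0 Xr Xc.
have h1 : X ord0 ord0 <= cost c X.
  rewrite /cost (bigD1 ord0) //= (bigD1 ord0) //= c00 mulr1 -addrA lerDl.
  rewrite addr_ge0 // ?sumr_ge0 // => [j _|i _]; first by rewrite mulr_ge0 ?c_ge0.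
  by rewrite sumr_ge0 // => j _; rewrite mulr_ge0 ?c_ge0.
have h2 : \sum_(j | j != ord0) X ord0 j <= t.
  apply: (@le_trans _ _ (\sum_(j | j != ord0) m' t j)).
    apply: ler_sum => j _; rewrite -Xc (bigD1 ord0) //= lerDl.
    by apply: sumr_ge0 => i _.
  have := sum_m' t; rewrite (bigD1 ord0) //=.
  have -> : m' t ord0 = 1 - t by rewrite /m' lazy_b eqxx.
  move=> h; lra.
have h3 := Xr ord0; rewrite (bigD1 ord0) //= in h3.
have e : m t ord0 = 1 - t by rewrite /m lazy_a eqxx.
rewrite e in h3; lra.
Qed.

Lemma sum_delta (n : nat) (i0 : 'I_n) (F : 'I_n -> R) :
  \sum_i (i == i0)%:R * F i = F i0.
Proof.
rewrite (bigD1 i0) //= eqxx mul1r big1 ?addr0 // => i hi.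
by rewrite (negbTE hi) mul0r.
Qed.

Lemma conv_MC (s t : R) X : 0 < s -> s <= t -> MC t X ->
  let Z := fun i j => s / t * X i j + (1 - s / t) * ((i == ord0) && (j == ord0))%:R in
  MC s Z /\ cost c Z = s / t * cost c X + (1 - s / t).
Proof.
move=> s0 st [X0 Xr Xc] Z.
have t0 : 0 < t by apply: lt_le_trans st.
have l0 : 0 <= s / t by rewrite divr_ge0 // ltW.
have l1 : s / t <= 1 by rewrite ler_pdivrMr // mul1r.
have lt : s / t * t = s by rewrite divfK // gt_eqF.
have hd : dl%:R != 0 :> R by rewrite pnatr_eq0 -lt0n dl_gt0.
have hd' : dl'%:R != 0 :> R by rewrite pnatr_eq0 -lt0n dl'_gt0.
split; first split.
- by move=> i j; rewrite /Z addr_ge0 // mulr_ge0 // subr_ge0.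
- move=> i; rewrite /Z big_split /= -!mulr_sumr Xr /m !lazy_a.
  case: (i =P ord0) => [_|/eqP hi].
    rewrite (eq_bigr (fun j : J => (j == ord0)%:R * 1)); last by move=> j _; rewrite mulr1.
    rewrite sum_delta.
    have e : s / t * (1 - t) + (1 - s / t) * 1 = 1 - s / t * t by ring.
    by rewrite e lt.
  rewrite big1 //.
  by rewrite mulr0 addr0 mulrA lt.
- move=> j; rewrite /Z big_split /= -!mulr_sumr Xc /m' !lazy_b.
  case: (j =P ord0) => [_|/eqP hj].
    rewrite (eq_bigr (fun i : I => (i == ord0)%:R * 1)); last by move=> i _; rewrite andbT mulr1.
    rewrite sum_delta.
    have e : s / t * (1 - t) + (1 - s / t) * 1 = 1 - s / t * t by ring.
    by rewrite e lt.
  rewrite big1; last by move=> i _; rewrite andbF.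
  by rewrite mulr0 addr0 mulrA lt.
- rewrite /cost /Z.
  under eq_bigr do under eq_bigr do rewrite mulrDl -!mulrA.
  under eq_bigr do rewrite big_split /= -!mulr_sumr.
  have hd0 : \sum_i \sum_j ((i == ord0) && (j == ord0))%:R * c i j = 1.
    transitivity (c ord0 ord0); last exact: c00.
    rewrite (eq_bigr (fun i => (i == ord0)%:R * c i ord0)).
      exact: (sum_delta ord0 (fun i => c i ord0)).
    move=> i _; rewrite (eq_bigr (fun j => (j == ord0)%:R * ((i == ord0)%:R * c i j))).
      exact: (sum_delta ord0 (fun j => (i == ord0)%:R * c i j)).
    by move=> j _; rewrite mulrA -natrM mulnb andbC.
  rewrite big_split /= -[X in X + _ = _]mulr_sumr -[X in _ + X = _]mulr_sumr hd0 mulr1.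
  by rewrite -mulr_sumr mulrA.
Qed.

Definition Wr (t : R) := fine (W1 nb (lazy_rw nb t x) (lazy_rw nb t x')).

Lemma W1_fin (t : R) : 0 <= t <= 1 ->
  W1 nb (lazy_rw nb t x) (lazy_rw nb t x') = (Wr t)%:E.
Proof.
move=> ht; rewrite /Wr fineK // W1_mat.
have h0 : (0 <= ereal_inf [set (cost c X)%:E | X in MC t])%E.
  by apply: le_ereal_inf_tmp => _ [X [X0 _ _] <-]; rewrite lee_fin cost_ge0.
rewrite ge0_fin_numE //.
apply: (@le_lt_trans _ _ (cost c (fun i j => m t i * m' t j))%:E); last exact: ltry.
by apply: ereal_inf_lbound; exists (fun i j => m t i * m' t j); first exact: prod_MC ht.
Qed.

Lemma Wr_le (t : R) X : 0 <= t <= 1 -> MC t X -> Wr t <= cost c X.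
Proof.
move=> ht hX; rewrite -lee_fin -W1_fin // W1_mat.
by apply: ereal_inf_lbound; exists X.
Qed.

Lemma Wr_ge (t r : R) : 0 <= t <= 1 -> (forall X, MC t X -> r <= cost c X) -> r <= Wr t.
Proof.
move=> ht h; rewrite -lee_fin -W1_fin // W1_mat.
by apply: le_ereal_inf_tmp => _ [X hX <-]; rewrite lee_fin h.
Qed.

Lemma Wr_lb (t : R) : 0 <= t <= 1 -> 1 - 2 * t <= Wr t.
Proof. by move=> ht; apply: Wr_ge => // X hX; apply: cost_lb hX. Qed.

Lemma Wr_conv (s t : R) : 0 < s -> s <= t -> t <= 1 ->
  Wr s <= s / t * Wr t + (1 - s / t).
Proof.
move=> s0 st t1.
have t0 : 0 < t by apply: lt_le_trans st.
have l0 : 0 < s / t by rewrite divr_gt0.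
have hs : 0 <= s <= 1 by rewrite ltW //= (le_trans st).
have ht : 0 <= t <= 1 by rewrite ltW.
suff : (s / t)^-1 * (Wr s - (1 - s / t)) <= Wr t.
  by rewrite ler_pdivrMl // => h; lra.
apply: Wr_ge => // X hX.
have [hZ hc] := conv_MC s0 st hX.
have := Wr_le hs hZ; rewrite hc => h.
by rewrite ler_pdivrMl //; lra.
Qed.

Lemma cost_scale (r : R) X : cost c (fun i j => r * X i j) = r * cost c X.
Proof.
rewrite /cost mulr_sumr; apply: eq_bigr => i _; rewrite mulr_sumr.
by apply: eq_bigr => j _; rewrite mulrA.
Qed.

Lemma cost_nat X : (forall i j, X i j \is a Num.nat) -> exists n : nat, cost c X = n%:R.
Proof.
move=> hX; apply/natrP; apply: rpred_sum => i _; apply: rpred_sum => j _.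
by apply: rpredM => //; have [_ ->] := c_spec i j.
Qed.

Lemma natr_intge0 (y : R) : y \is a Num.int -> 0 <= y -> y \is a Num.nat.
Proof. by move=> h1 h2; rewrite natrEint h1 h2. Qed.

Lemma scaled_nat (N : nat) : (0 < N)%N ->
  let M := (N * dl * dl')%N in
  (forall i, M%:R * m (N%:R^-1) i \is a Num.nat) /\
  (forall j, M%:R * m' (N%:R^-1) j \is a Num.nat).
Proof.
move=> N0 M.
have hN : N%:R != 0 :> R by rewrite pnatr_eq0 -lt0n.
have hd : dl%:R != 0 :> R by rewrite pnatr_eq0 -lt0n dl_gt0.
have hd' : dl'%:R != 0 :> R by rewrite pnatr_eq0 -lt0n dl'_gt0.
have ht : 0 <= (N%:R : R)^-1 <= 1.
  by rewrite invr_ge0 ler0n /= invf_le1 ?ler1n // ltr0n.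
split.
- move=> i; apply: natr_intge0; last by rewrite mulr_ge0 // m_ge0.
  rewrite /m lazy_a; case: ifP => _.
    have -> : M%:R * (1 - N%:R^-1) = M%:R - (dl * dl')%:R :> R.
      by rewrite /M !natrM; field.
    by apply: rpredB; apply: intr_nat; apply: rpred_nat.
  have -> : M%:R * (N%:R^-1 / dl%:R) = dl'%:R :> R.
    by rewrite /M !natrM; field; rewrite hd hN.
  by apply: intr_nat; apply: rpred_nat.
- move=> j; apply: natr_intge0; last by rewrite mulr_ge0 // m'_ge0.
  rewrite /m' lazy_b; case: ifP => _.
    have -> : M%:R * (1 - N%:R^-1) = M%:R - (dl * dl')%:R :> R.
      by rewrite /M !natrM; field.
    by apply: rpredB; apply: intr_nat; apply: rpred_nat.
  have -> : M%:R * (N%:R^-1 / dl'%:R) = dl%:R :> R.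
    by rewrite /M !natrM; field; rewrite hd' hN.
  by apply: intr_nat; apply: rpred_nat.
Qed.

Lemma opt_int (N : nat) : (0 < N)%N ->
  let t : R := N%:R^-1 in let M := (N * dl * dl')%N in
  exists Y, [/\ (forall i j, Y i j \is a Num.nat), MC t (fun i j => Y i j / M%:R),
    (forall X, MC t X -> cost c (fun i j => Y i j / M%:R) <= cost c X) &
    exists n : nat, cost c Y = n%:R].
Proof.
move=> N0 t M.
have [hr hc] := scaled_nat N0; rewrite -/t -/M in hr hc.
have M0 : 0 < M%:R :> R.
  by rewrite ltr0n /M !muln_gt0 N0 dl_gt0 dl'_gt0.
have ht : 0 <= t <= 1.
  by rewrite invr_ge0 ler0n /= invf_le1 ?ler1n // ltr0n.
have improve X : MC t X -> exists Y, [/\ (forall i j, Y i j \is a Num.nat),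
    MC t (fun i j => Y i j / M%:R) & cost c Y <= M%:R * cost c X].
  case=> X0 Xr Xc.
  have hXr i : \sum_j M%:R * X i j \is a Num.nat by rewrite -mulr_sumr Xr.
  have hXc j : \sum_i M%:R * X i j \is a Num.nat by rewrite -mulr_sumr Xc.
  have [Y [Yn Yr Yc YC]] := integral_improve c (X := fun i j => M%:R * X i j)
    (fun i j => mulr_ge0 (ltW M0) (X0 i j)) hXr hXc.
  exists Y; split => //; last by rewrite -cost_scale.
  split.
  - move=> i j; apply: divr_ge0; last exact: ltW M0.
    by have /natrP [k ->] := Yn i j; apply: ler0n.
  - move=> i; rewrite -mulr_suml Yr -mulr_sumr Xr mulrC mulKf //.
    by rewrite gt_eqF.
  - move=> j; rewrite -mulr_suml Yc -mulr_sumr Xc mulrC mulKf //.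
    by rewrite gt_eqF.
have exP : exists n, `[< exists Y, [/\ (forall i j, Y i j \is a Num.nat),
    MC t (fun i j => Y i j / M%:R) & cost c Y = n%:R] >].
  have [Y [Yn YM _]] := improve _ (prod_MC ht).
  have [n hn] := cost_nat Yn.
  by exists n; apply/asboolP; exists Y.
case: (ex_minnP exP) => n0 /asboolP [Y0 [Y0n Y0M Y0c]] hmin.
exists Y0; split => //; last by exists n0.
move=> X hX.
have [Y [Yn YM YC]] := improve _ hX.
have [n1 hn1] := cost_nat Yn.
have : (n0 <= n1)%N by apply: hmin; apply/asboolP; exists Y.
rewrite -(ler_nat R) -Y0c -hn1 => h.
have -> : cost c (fun i j => Y0 i j / M%:R) = M%:R^-1 * cost c Y0.
  by rewrite -cost_scale; congr cost; apply/funext => i; apply/funext => j; rewrite mulrC.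
rewrite ler_pdivrMl //.
exact: le_trans h YC.
Qed.

Lemma part1 (N : nat) : (0 < N)%N ->
  let t : R := N%:R^-1 in
  (exists xi : V -> V -> R,
      is_coupling (lazy_rw nb t x) (lazy_rw nb t x') xi /\
      coupling_cost nb xi = W1 nb (lazy_rw nb t x) (lazy_rw nb t x') /\
      (forall y y', exists k : nat, xi y y' = k%:R / (N * dl * dl')%:R)) /\
  exists n : nat, Wr t = n%:R / (N * dl * dl')%:R.
Proof.
move=> N0 t.
have [Y [Yn YM Yopt [n hn]]] := opt_int N0; rewrite -/t in YM Yopt.
have ht : 0 <= t <= 1.
  by rewrite invr_ge0 ler0n /= invf_le1 ?ler1n // ltr0n.
set M := (N * dl * dl')%N.
set Z := fun i j => Y i j / M%:R.
have WZ : Wr t = cost c Z.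
  by apply/eqP; rewrite eq_le Wr_le //= Wr_ge.
have cZ : cost c Z = n%:R / M%:R.
  rewrite -hn mulrC -cost_scale /Z; congr cost.
  by apply/funext => i; apply/funext => j; rewrite mulrC.
split; last by exists n; rewrite WZ cZ.
have [h1 h2] := mat_to_coupling YM.
exists (liftm Z); split => //; split.
  by rewrite h2 W1_fin // WZ.
move=> y y'; rewrite /liftm; case: pickP => [i _|_]; last by exists 0%N; rewrite mul0r.
case: pickP => [j _|_]; last by exists 0%N; rewrite mul0r.
by rewrite /Z; have /natrP [k ->] := Yn i j; exists k.
Qed.

Lemma kappa_eq (t : R) : kappa nb t x x' = 1 - Wr t.
Proof. by rewrite /kappa gdist_xx' /= divr1. Qed.

Lemma part2 : exists k : int, kappa nb (1 : R) x x' = k%:~R / (dl * dl')%:R.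
Proof.
have [_ [n hn]] := part1 (ltn0Sn 0).
have e : ((1%:R : R)^-1) = 1 by rewrite mulr1n invr1.
rewrite e in hn.
exists ((dl * dl')%:Z - n%:Z); rewrite kappa_eq hn mul1n.
have hD : (dl * dl')%:R != 0 :> R by rewrite pnatr_eq0 muln_eq0 negb_or -!lt0n dl_gt0 dl'_gt0.
rewrite rmorphB /= -!pmulrn.
have hd : dl%:R != 0 :> R by rewrite pnatr_eq0 -lt0n dl_gt0.
have hd' : dl'%:R != 0 :> R by rewrite pnatr_eq0 -lt0n dl'_gt0.
by rewrite natrM; field; rewrite hd hd'.
Qed.

Definition g (t : R) := kappa nb t x x' / t.

Lemma g_mono (s t : R) : 0 < s -> s <= t -> t <= 1 -> g t <= g s.
Proof.
move=> s0 st t1.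
have t0 : 0 < t by apply: lt_le_trans st.
have h := Wr_conv s0 st t1.
rewrite /g !kappa_eq [X in _ <= X]mulrC ler_pdivlMl //.
have -> : s * ((1 - Wr t) / t) = s / t * (1 - Wr t) by rewrite mulrA mulrAC.
have -> : s / t * (1 - Wr t) = s / t - s / t * Wr t by rewrite mulrBr mulr1.
lra.
Qed.

Lemma g_ub (t : R) : 0 < t -> t <= 1 -> g t <= 2.
Proof.
move=> t0 t1; have := Wr_lb (t := t); rewrite ltW //= t1 => /(_ isT) h.
rewrite /g kappa_eq ler_pdivrMr //; lra.
Qed.

Lemma g_int (N : nat) : (0 < N)%N -> (dl * dl')%:R * g (N%:R^-1) \is a Num.int.
Proof.
move=> N0; have [_ [n hn]] := part1 N0.
have hd : dl%:R != 0 :> R by rewrite pnatr_eq0 -lt0n dl_gt0.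
have hd' : dl'%:R != 0 :> R by rewrite pnatr_eq0 -lt0n dl'_gt0.
have hN : N%:R != 0 :> R by rewrite pnatr_eq0 -lt0n.
have -> : (dl * dl')%:R * g (N%:R^-1) = (N * dl * dl')%:R - n%:R.
  rewrite /g kappa_eq hn !natrM; field; rewrite hd hd' hN.
  done.
by apply: rpredB; apply: intr_nat; apply: rpred_nat.
Qed.

Lemma g_const : exists (L : R) (e : R), [/\ 0 < e,
  (forall t, 0 < t -> t <= e -> g t = L) &
  exists k : int, L = k%:~R / (dl * dl')%:R].
Proof.
pose D : R := (dl * dl')%:R.
have D0 : 0 < D by rewrite ltr0n muln_gt0 dl_gt0 dl'_gt0.
pose G (k : nat) := D * g (k.+1%:R^-1).
have inv1 (k : nat) : 0 < k.+1%:R^-1 :> R by rewrite invr_gt0 ltr0n.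
have inv2 (k : nat) : k.+1%:R^-1 <= 1 :> R by rewrite invf_le1 ?ltr0n // ler1n.
have Gint k : G k \is a Num.int by apply: g_int.
have Gub k : G k <= 2 * D.
  by rewrite /G mulrC ler_pM2r // g_ub.
have Gmono k : G k <= G k.+1.
  rewrite /G ler_pM2l //; apply: g_mono => //.
  by rewrite lef_pV2 ?posrE ?ltr0n // ler_nat.
pose p k := Num.trunc (2 * D - G k).
have pE k : (p k)%:R = 2 * D - G k.
  apply: truncnK; apply: natr_intge0; last by rewrite subr_ge0.
  apply: rpredB => //; apply: rpredM; apply: intr_nat; apply: rpred_nat.
have pmono k d : (p (k + d) <= p k)%N.
  elim: d => [|d IH]; first by rewrite addn0.
  apply: leq_trans IH; rewrite -(ler_nat R) !pE addnS.
  by rewrite lerD2l lerN2.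
have exP : exists n, `[< exists k, p k = n >] by exists (p 0%N); apply/asboolP; exists 0%N.
case: (ex_minnP exP) => n0 /asboolP [k0 hk0] hmin.
have Gc k : (k0 <= k)%N -> G k = G k0.
  move=> hk; have h1 : (p k <= p k0)%N by rewrite -(subnKC hk) pmono.
  have h2 : (n0 <= p k)%N by apply: hmin; apply/asboolP; exists k.
  have : p k = p k0 by apply/eqP; rewrite eqn_leq h1 hk0 h2.
  by move/(congr1 (fun n => n%:R : R)); rewrite !pE => h; lra.
exists (G k0 / D), (k0.+1%:R^-1); split => //.
  move=> t t0 te.
  have t1 : t <= 1 by apply: le_trans te (inv2 _).
  apply/eqP; rewrite eq_le; apply/andP; split.
    pose k := maxn k0 (Num.trunc t^-1).
    have hk : k.+1%:R^-1 < t.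
      have h1 : t^-1 < k.+1%:R.
        apply: lt_le_trans (truncnS_gt _) _; rewrite ler_nat ltnS.
        by rewrite /k leq_maxr.
      rewrite -[_^-1]mul1r ltr_pdivrMr ?ltr0n //.
      have : t * t^-1 < t * k.+1%:R by rewrite ltr_pM2l.
      by rewrite mulfV ?gt_eqF.
    have := g_mono (inv1 k) (ltW hk) t1.
    rewrite (_ : g (k.+1%:R^-1) = G k / D); last by rewrite /G [D * _]mulrC mulfK // gt_eqF.
    by rewrite Gc // /k leq_maxl.
  have := g_mono t0 te (inv2 _).
  by rewrite /G [D * _]mulrC mulfK // gt_eqF.
have /intrP [z hz] := Gint k0.
by exists z; rewrite hz.
Qed.

Lemma part3 : exists k : int, ric nb R x x' = (k%:~R / (dl * dl')%:R)%:E.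
Proof.
have [L [e [e0 hg [k hk]]]] := g_const.
exists k; rewrite -hk /ric limf_einfE.
set f := fun t : R => ((kappa nb t x x' / t)%:E).
have hV0 : ((0:R)^'+) [set t | 0 < t <= e].
  apply: filterS (filterI (nbhs_right_gt 0) (nbhs_right_lt e0)) => t [h1 h2].
  by rewrite /= h1 ltW.
apply/eqP; rewrite eq_le; apply/andP; split.
- apply: ge_ereal_sup => _ [W hW <-].
  have [t [tW /andP [t0 te]]] := filter_ex (filterI hW hV0).
  apply: ge_ereal_inf; exists (f t); first by exists t.
  by rewrite /f -/(g t) hg.
- apply: (@le_trans _ _ (ereal_inf (f @` [set t | 0 < t <= e]))).
    apply: le_ereal_inf_tmp => _ [t /andP [t0 te] <-].
    by rewrite /f -/(g t) hg.
  by apply: ereal_sup_ubound; exists [set t | 0 < t <= e].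
Qed.

End Main.

Theorem theorem1 (R : realType) (V : choiceType) (nb : V -> seq V)
  (nb_uniq : forall v, uniq (nb v))
  (nb_irr : forall v, v \notin nb v)
  (nb_sym : forall v w, (w \in nb v) = (v \in nb w))
  (x x' : V) (adj : x' \in nb x) (N : nat) (N_gt0 : (0 < N)%N) :
  let delta := size (nb x) in
  let delta' := size (nb x') in
  let t : R := (N%:R)^-1 in
  (exists xi : V -> V -> R,
      is_coupling (lazy_rw nb t x) (lazy_rw nb t x') xi /\
      coupling_cost nb xi = W1 nb (lazy_rw nb t x) (lazy_rw nb t x') /\
      (forall y y', exists k : nat, xi y y' = k%:R / (N * delta * delta')%:R)) /\
  (exists k : int, kappa nb (1 : R) x x' = k%:~R / (delta * delta')%:R) /\
  (exists k : int, ric nb R x x' = (k%:~R / (delta * delta')%:R)%:E).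
Proof.
move=> delta delta' t.
split; first by case: (part1 R nb_uniq nb_irr nb_sym adj N_gt0).
split; first exact: (part2 R nb_uniq nb_irr nb_sym adj).
exact: (part3 R nb_uniq nb_irr nb_sym adj).
Qed.
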